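(* Let $A\subset\mathcal R$ be a zone with width $w(A)=w$. Then there is a unique finite Puiseux series $$p(y)=a_1y^{r_1}+\cdots+a_ny^{r_n},$$ with $r_i$ positive rational numbers, $r_1<\cdots<r_n<\frac1w$, such that every $\alpha\in A$ has the form $$\alpha(y)=p(y)+\mathrm{h.o.t.}_{\ge \frac1w},$$ where $\mathrm{h.o.t.}_{\ge\frac1w}$ denotes a sum of nonzero terms of order greater than or equal to $\frac1w$.
   Context: Let $\mathcal R$ be the set of germs at $0$ of analytic arcs $\{x=\alpha(y),\ y\ge 0\}$ in the closed upper half-plane of $\mathbb R^2$ (half-branches of analytic curves through $0$), where $\alpha$ is given by a convergent Puiseux series $\alpha(y)=\sum_i c_iy^{p_i}$ with positive rational exponents $p_1<p_2<\cdots$. The order $\mathcal O(\gamma)$ of a Puiseux series $\gamma$ is the smallest exponent appearing with nonzero coefficient ($\mathcal O(0)=+\infty$). For $\alpha,\beta\in\mathcal R$ write $\alpha<\beta$ if $\alpha(y)<\beta(y)$ for all sufficiently small $y>0$. A subset $A\subset\mathcal R$ is a zone (is connected) if whenever $\alpha,\beta\in A$ with $\alpha<\beta$ and $\gamma\in\mathcal R$ with $\alpha<\gamma<\beta$, then $\gamma\in A$. The distance of two arcs is $d(\alpha,\beta)=1/\mathcal O(\alpha-\beta)$ (with $1/\infty=0$), and the width of a zone is $w(A)=\sup\{d(\alpha,\beta):\alpha,\beta\in A\}$. *)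

(* Defs.v *)
From HB Require Import structures.
From mathcomp Require Import all_boot all_order all_algebra.
From mathcomp Require Import all_classical all_reals all_analysis.
Set Implicit Arguments. Unset Strict Implicit. Unset Printing Implicit Defensive.
Import Order.TTheory GRing.Theory Num.Theory.
Import numFieldNormedType.Exports.
Local Open Scope classical_set_scope.
Local Open Scope ring_scope.

Section Arcs.
Variable R : realType.

(* A (Puiseux) series is given by its coefficient function: c q is the
   coefficient of y^q, for q a rational exponent. *)

Definition puiseux_on (c : rat -> R) (N : nat) : Prop :=
  (0 < N)%N /\ forall q : rat, c q != 0 ->
    exists k : nat, (0 < k)%N /\ q = k%:Q / N%:Q.

Definition puiseux_term (c : rat -> R) (N : nat) (y : R) (k : nat) : R :=
  c (k%:Q / N%:Q) * y `^ (ratr (k%:Q / N%:Q)).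

(* c is a convergent Puiseux series with positive rational exponents:
   sum_k c(k/N) t^k has positive radius of convergence. *)
Definition is_arc (c : rat -> R) : Prop :=
  exists N : nat, puiseux_on c N /\
    exists t : R, 0 < t /\ exists l : R, series (fun k => `|c (k%:Q / N%:Q)| * t ^+ k) @ \oo --> l.

Definition arc_lt (a b : rat -> R) : Prop :=
  exists N : nat, puiseux_on a N /\ puiseux_on b N /\
    exists e : R, 0 < e /\ forall y : R, 0 < y < e ->
      exists l : R, series (puiseux_term (b \- a) N y) @ \oo --> l /\ 0 < l.

(* A zone: a connected subset of the set of arcs. *)
Definition zone (A : set (rat -> R)) : Prop :=
  (forall a, A a -> is_arc a) /\
  forall a b g, A a -> A b -> is_arc g -> arc_lt a b -> arc_lt a g -> arc_lt g b -> A g.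

(* Order of a Puiseux series: smallest exponent with nonzero coefficient
   (+oo for the zero series). *)
Definition order (c : rat -> R) : \bar R :=
  ereal_inf [set (ratr q)%:E | q in [set q | c q != 0]].

Definition erecip (x : \bar R) : \bar R :=
  match x with
  | r%:E => (r^-1)%:E
  | +oo%E => 0%E
  | -oo%E => 0%E
  end.

Definition arc_dist (a b : rat -> R) : \bar R := erecip (order (a \- b)).

Definition width (A : set (rat -> R)) : \bar R :=
  ereal_sup [set arc_dist a b | a in A & b in A].

End Arcs.

(* Main.v *)
Require Import Defs.
From HB Require Import structures.
From mathcomp Require Import all_boot all_order all_algebra.
From mathcomp Require Import all_classical all_reals all_analysis.
Import Order.TTheory GRing.Theory Num.Theory.
Import numFieldNormedType.Exports.
Local Open Scope classical_set_scope.
Local Open Scope ring_scope.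

Lemma ratr_kN (R : realType) (k N : nat) :
  ratr (k%:Q / N%:Q) = (k%:R / N%:R :> R).
Proof. by rewrite fmorph_div !rmorph_int. Qed.

Lemma supp_lb {R : realType} {c : rat -> R} {N q} :
  puiseux_on c N -> c q != 0 -> (N%:R^-1 : R) <= ratr q /\ 0 < q.
Proof.
move=> [N0 H] /H [k [k0 ->]]; split.
  rewrite ratr_kN -[X in X <= _]mul1r; apply: ler_wpM2r.
    by rewrite invr_ge0 ler0n.
  by rewrite ler1n.
by apply: divr_gt0; rewrite ltr0n.
Qed.

Lemma supp_pos {R : realType} {c : rat -> R} {N q} :
  puiseux_on c N -> c q != 0 -> (0 : R) < ratr q.
Proof.
move=> HN Hq; have [H _] := supp_lb HN Hq.
apply: lt_le_trans H; rewrite invr_gt0 ltr0n; by case: HN.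
Qed.

Theorem lemma5p1 (R : realType) (A : set (rat -> R)) (w : \bar R) :
  zone A -> width A = w -> (0 < w)%E ->
  exists! p : rat -> R,
    [/\ finite_set [set q | p q != 0],
        (forall q, p q != 0 -> 0 < q /\ ((ratr q)%:E < erecip w)%E) &
        forall a, A a ->
          forall q, (a \- p) q != 0 -> (erecip w <= (ratr q)%:E)%E].
Proof.
move=> [Harc _] Hw w0.
have [a0 Aa0] : exists a0, A a0.
  move: w0; rewrite -Hw => /ereal_sup_gt [y [a Aa _] _]; by exists a.
have [Na [Ha0 _]] := Harc _ Aa0.
set s := erecip w.
have key : forall b, A b -> forall q, b q != a0 q -> (s <= (ratr q)%:E)%E.
  move=> b Ab q Hq; rewrite leNgt; apply/negP => Hlt.
  have [Nb [Hb _]] := Harc _ Ab.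
  set c : R := Num.min (Na%:R^-1) (Nb%:R^-1).
  have c0 : 0 < c.
    rewrite lt_min !invr_gt0 !ltr0n; case: Ha0 => -> _; by case: Hb => -> _.
  pose d := (b \- a0)%R.
  have lo : (c%:E <= Defs.order d)%E.
    apply: le_ereal_inf_tmp => x [q' Hq' <-]; rewrite lee_fin.
    have [bq|bq] := eqVneq (b q') 0.
      have aq : a0 q' != 0.
        by apply: contra Hq' => /eqP aq; rewrite /d /= bq aq subr0.
      have [H _] := supp_lb Ha0 aq.
      by apply: le_trans H; rewrite ge_min lexx.
    have [H _] := supp_lb Hb bq.
    by apply: le_trans H; rewrite ge_min lexx orbT.
  have up : (Defs.order d <= (ratr q)%:E)%E.
    apply: ereal_inf_lbound; exists q => //=; by rewrite subr_eq0.
  case E : (Defs.order d) lo up => [r'| |] //= lo up.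
  rewrite lee_fin in lo up.
  have r'0 : 0 < r' by apply: lt_le_trans lo.
  have hd : (arc_dist b a0 <= w)%E.
    rewrite -Hw; apply: ereal_sup_ubound; exists b => //; by exists a0.
  rewrite /arc_dist E /= in hd.
  move: w0 Hlt hd; rewrite /s; case: (w) => [r| |] //=.
  - rewrite !lte_fin lee_fin => r0 Hlt hd.
    have : r' < r^-1 by apply: le_lt_trans Hlt.
    rewrite -(ltf_pV2 (x:=r^-1) (y:=r')) ?posrE ?invr_gt0 // invrK => H.
    by move: (lt_le_trans H hd); rewrite ltxx.
  - rewrite lte_fin => _ Hlt _.
    by move: (lt_trans (lt_le_trans r'0 up) Hlt); rewrite ltxx.
pose p := fun q => if ((ratr q)%:E < s)%E then a0 q else 0.
have Pp : forall q, p q != 0 -> a0 q != 0 /\ ((ratr q)%:E < s)%E.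
  by move=> q; rewrite /p; case: ifP => [H1 H2|_]; rewrite ?eqxx.
have uniq : forall p1 p2 : rat -> R,
    (forall q, p1 q != 0 -> ((ratr q)%:E < s)%E) ->
    (forall q, p2 q != 0 -> ((ratr q)%:E < s)%E) ->
    (forall q, (a0 \- p1) q != 0 -> (s <= (ratr q)%:E)%E) ->
    (forall q, (a0 \- p2) q != 0 -> (s <= (ratr q)%:E)%E) ->
    p1 = p2.
  move=> p1 p2 h1 h2 g1 g2; apply/funext => q; apply/eqP; apply: contraT => ne.
  have lt : ((ratr q)%:E < s)%E.
    have [z1|] := eqVneq (p1 q) 0; last by move/h1.
    have [z2|] := eqVneq (p2 q) 0; last by move/h2.
    by move: ne; rewrite z1 z2 eqxx.
  have ge : (s <= (ratr q)%:E)%E.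
    have [z1|] := eqVneq ((a0 \- p1) q) 0; last by move/g1.
    have [z2|] := eqVneq ((a0 \- p2) q) 0; last by move/g2.
    move: z1 z2 => /= /eqP; rewrite subr_eq0 => /eqP h1' /eqP.
    by rewrite subr_eq0 h1' (negbTE ne).
  by move: (lt_le_trans lt ge); rewrite ltxx.
have cond3 : forall a, A a -> forall q, (a \- p) q != 0 -> (s <= (ratr q)%:E)%E.
  move=> b Ab q; case: (boolP ((ratr q)%:E < s)%E) => [lt|]; last by rewrite -leNgt.
  rewrite /= /p lt subr_eq0 => H; exact: key Ab q H.
exists p; split.
  split.
  - move: w0 (erefl s); rewrite {2}/s; case: (w) => [r| |] //= r0 hs; last first.
      apply: (sub_finite_set (B := set0)); last exact: finite_set0.
      move=> q /= /Pp [aq]; rewrite hs lte_fin => lt.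
      by move: (lt_trans (supp_pos Ha0 aq) lt); rewrite ltxx.
    rewrite lte_fin in r0.
    have Na0 : (0 < Na)%N by case: Ha0.
    set M := Num.Def.archi_bound (Na%:R * r^-1 : R).
    apply: (sub_finite_set (B := [set (k%:Q / Na%:Q) | k in `I_M])); last first.
      exact/finite_image/finite_II.
    move=> q /= /Pp [aq]; rewrite hs lte_fin => lt.
    case: Ha0 => _ /(_ q aq) [k [k0 qk]]; exists k => //.
    have Mge : 0 <= (Na%:R * r^-1 : R).
      by apply: mulr_ge0; [rewrite ler0n | rewrite invr_ge0 ltW].
    have HM := archi_boundP Mge.
    rewrite /= -(ltr_nat R); apply: (lt_trans _ HM).
    move: lt; rewrite qk ratr_kN ltr_pdivrMr; last by rewrite ltr0n.
    by rewrite [X in _ < X]mulrC.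
  - move=> q /Pp [aq lt]; split => //; by have [_] := supp_lb Ha0 aq.
  - exact: cond3.
move=> p' [_ h2 g2]; apply: uniq.
- by move=> q /Pp [].
- by move=> q /h2 [].
- by move=> q; apply: cond3.
- by move=> q; apply: g2.
Qed.
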